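(* Fix $0<\theta<1$ and let $P_N(k)=W(N,k)/[N]_\theta!$ for $0\le k\le N-1$. Then: 1. For each fixed integer $j\ge1$, $\lim_{N\to\infty}P_N(N-j)=j\,\theta^{j-1}(1-\theta)$. 2. If $(k_N)$ is any sequence with $0\le k_N\le N-1$ and $N-k_N\to\infty$, then $P_N(k_N)\to0$. 3. The function $g(j)=j\,\theta^{j-1}(1-\theta)$ on real $j\ge1$ attains its maximum at $j^*=\max(-1/\ln\theta,\,1)$. When $1/e<\theta<1$, the maximum value is $g(j^* )=e^{-1}\,\dfrac{\theta-1}{\theta\ln\theta}$.
   Context: Permutations of $\{1,\dots,N\}$ are written in one-line notation; $\mathfrak S_N$ is the set of all of them. An entry $\pi_j$ is a left-to-right maximum if $\pi_j>\pi_i$ for all $i<j$; $\mathrm{inv}(\pi)$ is the number of pairs $i<j$ with $\pi_i>\pi_j$. Definitions: - $[m]_\theta=1+\theta+\cdots+\theta^{m-1}$ and $[m]_\theta!=[1]_\theta\cdots[m]_\theta$; note $[N]_\theta!=\sum_{\pi\in\mathfrak S_N}\theta^{\mathrm{inv}(\pi)}$. - For $0\le k\le N-1$, $\pi\in\mathfrak S_N$ is $k$-winnable if the first index $j>k$ with $\pi_j$ a left-to-right maximum has $\pi_j=N$. - $W(N,k)=\sum_{k\text{-winnable }\pi}\theta^{\mathrm{inv}(\pi)}$. Thus $P_N(k)$ is the probability of winning the best choice game under the Mallows distribution, in which $\pi\in\mathfrak S_N$ has probability $\theta^{\mathrm{inv}(\pi)}/[N]_\theta!$. The game is played with the positional strategy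 that rejects the first $k$ candidates and accepts the next left-to-right maximum; winning means the accepted candidate $i$ has $\pi_i=N$. *)

(* Defs.v *)
From mathcomp Require Import all_boot all_fingroup.
From Stdlib Require Import Reals.

Set Implicit Arguments.
Unset Strict Implicit.
Unset Printing Implicit Defensive.

(* Permutations of {1,...,N} are modelled as s : 'S_N (permutations of
   'I_N = {0,...,N-1}); position j (1-based) is position j-1 here and value v
   is v-1 here.  This shift preserves inversions, left-to-right maxima and
   "the entry equals the maximum N". *)

Definition lrmax (N : nat) (s : 'S_N) (j : 'I_N) : bool :=
  [forall i : 'I_N, (i < j)%N ==> (s i < s j)%N].

Definition inv (N : nat) (s : 'S_N) : nat :=
  #|[set p : 'I_N * 'I_N | (p.1 < p.2)%N && (s p.2 < s p.1)%N]|.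

(* k-winnable: the first (1-based) index j > k, i.e. 0-based index >= k,
   which is a left-to-right maximum carries the maximal value. *)
Definition winnable (N k : nat) (s : 'S_N) : bool :=
  [exists j : 'I_N,
    [&& (k <= j)%N, lrmax s j, nat_of_ord (s j) == N.-1 &
        [forall i : 'I_N, ((k <= i)%N && (i < j)%N) ==> ~~ lrmax s i]]].

Definition W (N k : nat) (theta : R) : R :=
  \big[Rplus/0%R]_(s : 'S_N | winnable k s) (theta ^ inv s)%R.

Definition qint (m : nat) (theta : R) : R :=
  \big[Rplus/0%R]_(i < m) (theta ^ i)%R.

Definition qfact (N : nat) (theta : R) : R :=
  \big[Rmult/1%R]_(1 <= m < N.+1) qint m theta.

Definition P (N k : nat) (theta : R) : R := (W N k theta / qfact N theta)%R.

(* Main.v *)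
Require Import Defs.
From Stdlib Require Import Reals Lra Lia.

Section RS.
Local Open Scope R_scope.

Lemma part3 (theta : R) (h0 : 0 < theta) (h1 : theta < 1) :
  (let g := fun x : R => (x * Rpower theta (x - 1) * (1 - theta))%R in
   let jstar := Rmax (- 1 / ln theta) 1 in
   ((1 <= jstar)%R /\ (forall x : R, (1 <= x)%R -> (g x <= g jstar)%R)) /\
   ((1 / exp 1 < theta)%R ->
      g jstar = (exp (-1) * ((theta - 1) / (theta * ln theta)))%R)).
Proof.
intros g jstar.
assert (hl : ln theta < 0).
{ rewrite <- ln_1; apply ln_increasing; lra. }
set (c := - ln theta).
assert (hc : 0 < c) by (unfold c; lra).
assert (ej : - 1 / ln theta = / c) by (unfold c; field; lra).
assert (hg : forall x, g x = x * exp (- c * (x - 1)) * (1 - theta)).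
{ intro x; unfold g, Rpower, c; f_equal; f_equal; f_equal; ring. }
split; [split|].
- apply Rmax_r.
- intros x hx. rewrite !hg. apply Rmult_le_compat_r; [lra|].
  unfold jstar; rewrite ej.
  destruct (Rle_dec (/ c) 1) as [hle | hgt].
  + rewrite Rmax_right by lra.
    assert (c1 : 1 <= c).
    { apply Rnot_lt_le; intro hlt.
      assert (1 < / c). { rewrite <- Rinv_1; apply Rinv_lt_contravar; lra. }
      lra. }
    replace (1 - 1) with 0 by ring. rewrite Rmult_0_r, exp_0.
    assert (e1 := exp_ineq1_le (c * (x - 1))).
    assert (e2 : exp (- c * (x - 1)) * exp (c * (x - 1)) = 1).
    { rewrite <- exp_plus. replace (- c * (x - 1) + c * (x - 1)) with 0 by ring.
      apply exp_0. }
    assert (e3 := exp_pos (- c * (x - 1))).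
    assert (e4 : x <= exp (c * (x - 1))) by nra.
    assert (e5 := Rmult_le_compat_l _ _ _ (Rlt_le _ _ e3) e4).
    lra.
  + rewrite Rmax_left by lra.
    assert (e1 := exp_ineq1_le (c * x - 1)).
    assert (e2 : exp (- c * (x - 1)) * exp (c * x - 1) = exp (- c * (/ c - 1))).
    { rewrite <- exp_plus. f_equal. field. lra. }
    assert (e3 := exp_pos (- c * (x - 1))).
    assert (e4 : / c * exp (- c * (/ c - 1)) * c = exp (- c * (/ c - 1))).
    { field; lra. }
    apply Rmult_le_reg_r with c; [lra|].
    rewrite e4. rewrite <- e2. nra.
- intro ht.
  assert (hc1 : c < 1).
  { unfold c. assert (ln (1 / exp 1) < ln theta).
    { apply ln_increasing; [|lra]. unfold Rdiv; rewrite Rmult_1_l.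
      apply Rinv_0_lt_compat, exp_pos. }
    unfold Rdiv in H; rewrite Rmult_1_l, ln_Rinv, ln_exp in H by apply exp_pos.
    lra. }
  unfold jstar; rewrite ej, Rmax_left.
  2:{ apply Rlt_le. rewrite <- Rinv_1 at 1. apply Rinv_lt_contravar; lra. }
  rewrite hg.
  replace (- c * (/ c - 1)) with (-1 + c) by (field; lra).
  rewrite exp_plus.
  assert (ec : exp c = / theta).
  { unfold c. rewrite <- ln_Rinv by lra. apply exp_ln. apply Rinv_0_lt_compat; lra. }
  rewrite ec. unfold c. field. split; lra.
Qed.

Lemma binom_bound (h : R) (n : nat) : 0 <= h ->
  1 + INR n * h + INR n * (INR n - 1) / 2 * h ^ 2 <= (1 + h) ^ n.
Proof.
intro hh. induction n as [|n IH].
- simpl. lra.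
- rewrite S_INR. simpl pow.
  assert (hn : 0 <= INR n * (INR n - 1)).
  { destruct n. simpl; lra. rewrite S_INR. assert (0 <= INR n) by apply pos_INR. nra. }
  assert (hp : 0 <= INR n) by apply pos_INR.
  assert (h3 : 0 <= INR n * (INR n - 1) / 2 * h ^ 3).
  { apply Rmult_le_pos; [lra|]. apply pow_le; lra. }
  assert (IH' := Rmult_le_compat_l (1 + h) _ _ ltac:(lra) IH).
  simpl pow in *. nra.
Qed.

Lemma decay (th : R) : 0 < th -> th < 1 -> forall eps, 0 < eps ->
  exists M : nat, forall L : nat, le M L -> INR L * th ^ (L - 1) < eps.
Proof.
intros h0 h1 eps he.
set (h := / th - 1).
assert (hh : 0 < h).
{ unfold h. assert (1 < / th). { rewrite <- Rinv_1. apply Rinv_lt_contravar; lra. } lra. }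
set (A := 2 / (h ^ 2 * th * eps)).
assert (hA : 0 < A).
{ unfold A. apply Rdiv_lt_0_compat; [lra|]. apply Rmult_lt_0_compat; [|lra].
  apply Rmult_lt_0_compat; [|lra]. apply pow_lt; lra. }
destruct (INR_unbounded (A + 1)) as [M HM].
exists M. intros L hL.
assert (hx : INR L > A + 1).
{ apply le_INR in hL. lra. }
destruct L as [|L]. { simpl in hx. lra. }
replace (S L - 1)%nat with L by lia.
set (x := INR (S L)) in *.
set (t := th ^ L).
assert (ht : 0 <= t) by (apply pow_le; lra).
assert (hB := binom_bound h (S L) (Rlt_le _ _ hh)). fold x in hB.
assert (hprod : (1 + h) ^ S L * th ^ S L = 1).
{ rewrite <- Rpow_mult_distr. replace ((1 + h) * th) with 1 by (unfold h; field; lra).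
  apply pow1. }
set (B := (1 + h) ^ S L) in *.
replace (th ^ S L) with (th * t) in hprod by reflexivity.
assert (hxA : (x - 1) * (h ^ 2 * th * eps) > 2).
{ assert (hD : 0 < h ^ 2 * th * eps).
  { apply Rmult_lt_0_compat; [|lra]. apply Rmult_lt_0_compat; [|lra]. apply pow_lt; lra. }
  assert (eA : A * (h ^ 2 * th * eps) = 2) by (unfold A; field; lra).
  assert (H := Rmult_lt_compat_r _ _ _ hD (ltac:(lra) : A < x - 1)). lra. }
assert (hC : x * (x - 1) / 2 * h ^ 2 <= B).
{ assert (0 <= x * h). { apply Rmult_le_pos; [|lra]. unfold x; apply pos_INR. } lra. }
assert (htt : 0 <= th * t) by nra.
assert (hk : th * t * (x * (x - 1) / 2 * h ^ 2) <= 1).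
{ assert (H := Rmult_le_compat_l _ _ _ htt hC). nra. }
assert (hxt : 0 <= x * t) by (apply Rmult_le_pos; [unfold x; apply pos_INR| lra]).
destruct (Rlt_or_le (x * t) eps) as [ok|bad]; [exact ok|].
exfalso.
assert (H2 : x * t * ((x - 1) * h ^ 2 * th) <= 2) by nra.
assert (hpos : 0 <= (x - 1) * h ^ 2 * th).
{ assert (0 < h ^ 2) by (apply pow_lt; lra). nra. }
assert (H3 := Rmult_le_compat_r _ _ _ hpos bad).
nra.
Qed.

End RS.

From HB Require Import structures.

From mathcomp Require Import all_boot all_fingroup.
From Stdlib Require Import Reals.
From Stdlib Require Import Lra Lia.
From mathcomp Require Import zify.

Set Implicit Arguments.
Unset Strict Implicit.
Unset Printing Implicit Defensive.

HB.instance Definition _ := Monoid.isComLaw.Build R 0%R Rplus (fun a b c => esym (Rplus_assoc a b c)) Rplus_comm Rplus_0_l.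
HB.instance Definition _ := Monoid.isComLaw.Build R 1%R Rmult (fun a b c => esym (Rmult_assoc a b c)) Rmult_comm Rmult_1_l.

Lemma sum_fix (N : nat) (i0 j0 : 'I_N.+1) (F : 'S_N.+1 -> R) :
  \big[Rplus/0%R]_(s : 'S_N.+1 | s i0 == j0) F s =
  \big[Rplus/0%R]_(s : 'S_N) F (lift_perm i0 j0 s).
Proof.
rewrite (reindex (lift_perm i0 j0)); last first.
  pose ulsf i (s : 'S_N.+1) k := odflt k (unlift (s i) (s (lift i k))).
  have ulsfK i (s : 'S_N.+1) k: lift (s i) (ulsf i s k) = s (lift i k).
    rewrite /ulsf; have:= neq_lift i k.
    by rewrite -(can_eq (permK s)) => /unlift_some[] ? ? ->.
  have inj_ulsf: injective (ulsf i0 _).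
    move=> s; apply: can_inj (ulsf (s i0) s^-1%g) _ => k'.
    by rewrite {1}/ulsf ulsfK !permK liftK.
  exists (fun s => perm (inj_ulsf s)) => [s _ | s].
    by apply/permP=> k'; rewrite permE /ulsf lift_perm_lift lift_perm_id liftK.
  move/(s _ =P _) => si0; apply/permP=> k.
  case: (unliftP i0 k) => [k'|] ->; rewrite ?lift_perm_id //.
  by rewrite lift_perm_lift -si0 permE ulsfK.
by apply: eq_bigl => s; rewrite lift_perm_id eqxx.
Qed.

Lemma sum_split (N : nat) (F : 'S_N.+1 -> R) :
  \big[Rplus/0%R]_(s : 'S_N.+1) F s =
  \big[Rplus/0%R]_(v : 'I_N.+1) \big[Rplus/0%R]_(s : 'S_N) F (lift_perm ord_max v s).
Proof.
rewrite (partition_big (fun s : 'S_N.+1 => s ord_max) xpredT) //=.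
by apply: eq_bigr => v _; rewrite sum_fix.
Qed.
Definition invs N (s : 'S_N) : nat :=
  \sum_(i < N) \sum_(j < N) ((i < j) && (s j < s i)).

Lemma inv_invs N (s : 'S_N) : Defs.inv s = invs s.
Proof.
rewrite /Defs.inv /invs cardsE -sum1_card big_mkcond /= pair_big /=.
apply: eq_bigr => p _; rewrite -topredE /=; by case: (_ && _).
Qed.

Lemma bumpE (v x : nat) : bump v x = if v <= x then x.+1 else x.
Proof. by rewrite /bump; case: ifP; lia. Qed.

Lemma sum_geq (N v : nat) : \sum_(x < N) (v <= x) = N - v.
Proof.
elim: N => [|N IH]; first by rewrite big_ord0.
rewrite big_ord_recr /= IH; case: (leqP v N) => h /=; lia.
Qed.

Lemma widen_lift N (i : 'I_N) : widen_ord (leqnSn N) i = lift ord_max i.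
Proof. by apply: val_inj; rewrite /= /bump leqNgt ltn_ord. Qed.

Lemma inv_lift N (v : 'I_N.+1) (s : 'S_N) :
  invs (lift_perm ord_max v s) = invs s + (N - v).
Proof.
rewrite /invs big_ord_recr /= [X in _ + X = _]big1 ?addn0; last first.
  by move=> j _; rewrite ltnNge leq_ord.
rewrite -(sum_geq N v).
rewrite [X in _ = _ + X](reindex_inj (@perm_inj _ s)) /= -big_split /=.
apply: eq_bigr => i _; rewrite big_ord_recr /=; congr (_ + _).
  apply: eq_bigr => j _; rewrite !widen_lift !lift_perm_lift /= !bumpE.
  congr (_ && _); case: (leqP v (s j)) => h1; case: (leqP v (s i)) => h2; apply/idP/idP => /= h; lia.
rewrite widen_lift lift_perm_lift lift_perm_id /= bumpE ltn_ord /=.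
by case: (leqP v (s i)) => h; [rewrite ltnS h | rewrite ltnNge ltnW].
Qed.
Definition cnt N k (s : 'S_N) : nat := \sum_(i < N) ((k <= i) && lrmax s i).

Lemma ltn_liftv N (v : 'I_N.+1) (a b : 'I_N) : (lift v a < lift v b) = (a < b).
Proof.
rewrite /= !bumpE; case: (leqP v a) => h1; case: (leqP v b) => h2;
  apply/idP/idP => /= h; lia.
Qed.

Lemma lrmax_lift N (v : 'I_N.+1) (s : 'S_N) (i : 'I_N) :
  lrmax (lift_perm ord_max v s) (lift ord_max i) = lrmax s i.
Proof.
rewrite /lrmax; apply/forallP/forallP => H x.
  have := H (lift ord_max x); rewrite !lift_perm_lift !lift_max ltn_liftv //.
case: (unliftP ord_max x) => [x'|] ->.
  by have := H x'; rewrite !lift_perm_lift !lift_max ltn_liftv.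
by rewrite lift_max /= ltnNge ltnW.
Qed.

Lemma lrmax_max N (v : 'I_N.+1) (s : 'S_N) :
  lrmax (lift_perm ord_max v s) ord_max = (v == ord_max).
Proof.
rewrite /lrmax; apply/forallP/eqP => [H | ->].
  apply: val_inj => /=; apply/eqP; rewrite eqn_leq -ltnS ltn_ord /=.
  rewrite leqNgt; apply/negP => hv.
  pose y := Ordinal hv; have := H (lift ord_max ((s^-1)%g y)).
  rewrite lift_perm_lift lift_perm_id lift_max ltn_ord permKV /= bumpE leqnn /=.
  lia.
move=> x; case: (unliftP ord_max x) => [x'|] ->.
  by rewrite lift_perm_lift lift_perm_id !lift_max /= !ltn_ord.
by rewrite ltnn.
Qed.

Lemma cnt_lift N k (hk : k <= N) (v : 'I_N.+1) (s : 'S_N) :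
  cnt k (lift_perm ord_max v s) = cnt k s + (v == ord_max).
Proof.
rewrite /cnt big_ord_recr /= hk lrmax_max; congr (_ + _).
by apply: eq_bigr => i _; rewrite widen_lift lrmax_lift.
Qed.

Lemma cnt_top N (s : 'S_N) : cnt N s = 0.
Proof. by rewrite /cnt big1 // => i _; rewrite leqNgt ltn_ord. Qed.

Lemma winnable_cnt N k (s : 'S_N) : winnable k s = (cnt k s == 1).
Proof.
case: N s => [|n] s.
  by rewrite /winnable /cnt big_ord0; apply/existsP => -[[m hm]].
pose p := (s^-1)%g ord_max.
have sp : s p = ord_max by rewrite permKV.
have Lp : lrmax s p.
  apply/forallP => i; apply/implyP => hi; rewrite sp /=.
  have : s i != ord_max by rewrite -sp (inj_eq perm_inj) neq_ltn hi.
  by rewrite neq_ltn /= => /orP [] //; rewrite ltnNge leq_ord.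
have F2 : forall i : 'I_n.+1, p < i -> ~~ lrmax s i.
  move=> i hi; apply/negP => /forallP /(_ p) /implyP /(_ hi).
  by rewrite sp ltnNge leq_ord.
have wit : forall j : 'I_n.+1, (nat_of_ord (s j) == n.+1.-1) = (j == p).
  move=> j; by rewrite -(inj_eq (@perm_inj _ s)) sp -val_eqE.
case: (leqP k p) => hkp; last first.
  rewrite /cnt big1; last first.
    move=> i _; case: (leqP k i) => //= hki; by rewrite (negbTE (F2 i (leq_trans hkp hki))).
  apply/existsP => -[j /and4P [hkj _ /eqP hj _]].
  have : j = p by apply/eqP; rewrite -wit; apply/eqP.
  move=> ejp; subst j; lia.
rewrite /cnt (bigD1 p) //= hkp Lp /= add1n eqSS.
rewrite sum_nat_eq0; apply/existsP/forallP => [[j /and4P [hkj lj /eqP hj hf]] | H].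
  have ejp : j = p by apply/eqP; rewrite -wit; apply/eqP.
  subst j => i; apply/implyP => hip; case: (leqP k i) => //= hki.
  case: (ltngtP i p) => hi.
  - by have := forallP hf i; rewrite hki hi /= => /negbTE ->.
  - by rewrite (negbTE (F2 _ hi)).
  - by move: hip; rewrite (val_inj hi) eqxx.
exists p; rewrite hkp Lp sp eqxx /=; apply/forallP => i; apply/implyP => /andP [hki hip].
have := H i; have hne : i != p by rewrite neq_ltn hip.
by rewrite hne hki /= eqb0.
Qed.

Lemma sumR_mull (I : finType) (P : pred I) (F : I -> R) c :
  (\big[Rplus/0%R]_(i | P i) F i * c = \big[Rplus/0%R]_(i | P i) (F i * c))%R.
Proof.
by rewrite (big_morph (fun x => x * c)%R (fun x y => Rmult_plus_distr_r x y c) (Rmult_0_l c)).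
Qed.

Lemma sumR_mulr (I : finType) (P : pred I) (F : I -> R) c :
  (c * \big[Rplus/0%R]_(i | P i) F i = \big[Rplus/0%R]_(i | P i) (c * F i))%R.
Proof.
by rewrite (big_morph (fun x => c * x)%R (fun x y => Rmult_plus_distr_l c x y) (Rmult_0_r c)).
Qed.

Lemma qint_S m th : qint m.+1 th = (1 + th * qint m th)%R.
Proof.
rewrite /qint big_ord_recl /= sumR_mulr; congr (_ + _)%R.
Qed.

Lemma qint_rev N th :
  (th * qint N th)%R = \big[Rplus/0%R]_(v < N) (th ^ (N - v))%R.
Proof.
rewrite /qint sumR_mulr (reindex_inj rev_ord_inj) /=.
apply: eq_bigr => i _.
have -> : N - i = (N - i.+1).+1 by have := ltn_ord i; lia.
by [].
Qed.

Lemma decomp N k (hk : k <= N) (f : nat -> R) th :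
  \big[Rplus/0%R]_(s : 'S_N.+1) (f (cnt k s) * th ^ invs s)%R =
  ((\big[Rplus/0%R]_(s : 'S_N) (f (cnt k s) * th ^ invs s)) * (th * qint N th) +
   \big[Rplus/0%R]_(s : 'S_N) (f (addn (cnt k s) 1) * th ^ invs s))%R.
Proof.
rewrite sum_split big_ord_recr /=; congr (_ + _)%R.
  rewrite qint_rev sumR_mulr /=; apply: eq_bigr => v _.
  rewrite sumR_mull; apply: eq_bigr => s _.
  rewrite cnt_lift // inv_lift pow_add.
  have -> : (widen_ord (leqnSn N) v == ord_max) = false.
    by apply/negbTE; rewrite neq_ltn /= ltn_ord.
  rewrite addn0 /=; ring.
apply: eq_bigr => s _; rewrite cnt_lift // inv_lift eqxx /= subnn addn0.
by [].
Qed.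

Definition Af N k t th : R :=
  \big[Rplus/0%R]_(s : 'S_N) ((if cnt k s == t then 1 else 0) * th ^ invs s)%R.
Definition T N th : R := \big[Rplus/0%R]_(s : 'S_N) ((fun _ => 1%R) (cnt 0 s) * th ^ invs s)%R.

Lemma W_Af N k th : W N k th = Af N k 1%nat th.
Proof.
rewrite /W /Af big_mkcond; apply: eq_bigr => s _.
rewrite winnable_cnt inv_invs; case: ifP => _; ring.
Qed.

Lemma T_S N th : T N.+1 th = (T N th * qint N.+1 th)%R.
Proof. rewrite /T (@decomp N 0 (leq0n N) (fun _ => 1%R)) qint_S; ring. Qed.

Lemma qfact_S N th : qfact N.+1 th = (qfact N th * qint N.+1 th)%R.
Proof. by rewrite /qfact big_nat_recr. Qed.

Lemma T_qfact N th : T N th = qfact N th.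
Proof.
elim: N => [|N IH]; last by rewrite T_S qfact_S IH.
rewrite /T /qfact big_geq // (big_pred1 1%g) /=.
  by rewrite /invs big_ord0; ring.
by move=> s; apply/esym/eqP/permP => -[].
Qed.

Lemma Af_rec0 N k (hk : k <= N) th :
  Af N.+1 k 0%nat th = (Af N k 0%nat th * (th * qint N th))%R.
Proof.
rewrite /Af (@decomp N k hk (fun c => if c == 0%nat then 1%R else 0%R)) [X in (_ + X)%R]big1 ?Rplus_0_r //.
move=> s _; rewrite addn1 /=; ring.
Qed.

Lemma Af_rec1 N k (hk : k <= N) th :
  Af N.+1 k 1%nat th = (Af N k 1%nat th * (th * qint N th) + Af N k 0%nat th)%R.
Proof.
rewrite /Af (@decomp N k hk (fun c => if c == 1%nat then 1%R else 0%R)); congr (_ + _)%R.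
by apply: eq_bigr => s _; rewrite addn1 eqSS.
Qed.

Lemma Af_top0 N th : Af N N 0 th = qfact N th.
Proof. by rewrite -T_qfact /Af /T; apply: eq_bigr => s _; rewrite cnt_top. Qed.

Lemma Af_top1 N th : Af N N 1 th = 0%R.
Proof. by rewrite /Af big1 // => s _; rewrite cnt_top /=; ring. Qed.

Section An.
Variable th : R.
Hypothesis h0 : (0 < th)%R.
Hypothesis h1 : (th < 1)%R.

Lemma Q_ge0 m : (0 <= qint m th)%R.
Proof.
elim: m => [|m IH]; first by rewrite /qint big_ord0; lra.
rewrite qint_S; nra.
Qed.

Lemma Q_ge1 m : (1 <= qint m.+1 th)%R.
Proof. rewrite qint_S; have := Q_ge0 m; nra. Qed.

Lemma Q_closed m : (qint m th * (1 - th) = 1 - th ^ m)%R.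
Proof.
elim: m => [|m IH]; first by rewrite /qint big_ord0 /=; ring.
rewrite qint_S /=; nra.
Qed.

Lemma qfact_pos N : (0 < qfact N th)%R.
Proof.
elim: N => [|N IH]; first by rewrite /qfact big_geq //; lra.
rewrite qfact_S; have := Q_ge1 N; nra.
Qed.

Definition rho m := (th * qint m th / qint m.+1 th)%R.
Definition sig m := (/ qint m.+1 th)%R.

Lemma rho_sig m : (rho m = 1 - sig m)%R.
Proof.
rewrite /rho /sig; have := Q_ge1 m; rewrite qint_S => h; field; lra.
Qed.

Lemma sig_bounds m : (0 <= sig m - (1 - th) <= th ^ m.+1)%R.
Proof.
have hq := Q_ge1 m; have hc := Q_closed m.+1.
have e : (sig m - (1 - th) = th ^ m.+1 / qint m.+1 th)%R.
  rewrite /sig; field_simplify_eq; [nra | lra].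
rewrite e; have hp : (0 < th ^ m.+1)%R by apply: pow_lt.
split.
  apply: Rmult_le_pos; [lra | apply: Rlt_le; apply: Rinv_0_lt_compat; lra].
rewrite /Rdiv -{2}(Rmult_1_r (th ^ m.+1)); apply: Rmult_le_compat_l; first lra.
rewrite -Rinv_1; apply: Rinv_le_contravar; lra.
Qed.

Lemma sig_range m : (0 <= sig m <= 1)%R.
Proof.
have hq := Q_ge1 m; rewrite /sig; split.
  by apply: Rlt_le; apply: Rinv_0_lt_compat; lra.
rewrite -Rinv_1; apply: Rinv_le_contravar; lra.
Qed.

Lemma pow_le_one x n : (0 <= x <= 1 -> x ^ n <= 1)%R.
Proof.
move=> hx; elim: n => [|n IH] /=; first lra.
have : (0 <= x ^ n)%R by apply: pow_le; lra.
nra.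
Qed.

Lemma rho_range m : (0 <= rho m <= th)%R.
Proof.
have := sig_bounds m; have := sig_range m; rewrite rho_sig => ha hb.
have : (th ^ m.+1 <= th)%R.
  rewrite -tech_pow_Rmult; have := @pow_le_one th m.
  have : (0 <= th ^ m)%R by apply: pow_le; lra.
  move=> ha' hb'; have := hb' (conj (Rlt_le _ _ h0) (Rlt_le _ _ h1)); nra.
lra.
Qed.

Lemma Un_cv_ext (f g : nat -> R) l : (forall n, f n = g n) -> Un_cv f l -> Un_cv g l.
Proof. move=> e H eps he; case: (H eps he) => N HN; exists N => n hn; rewrite -e; auto. Qed.

Lemma Un_cv_eq (f : nat -> R) l l' : l = l' -> Un_cv f l -> Un_cv f l'.
Proof. by move=> ->. Qed.

Lemma pow_cv0 : Un_cv (fun n => th ^ n)%R 0%R.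
Proof.
move=> eps he; have := @pow_lt_1_zero th _ eps he.
case=> [|N HN]; first by rewrite Rabs_right; lra.
by exists N => n hn; rewrite /R_dist Rminus_0_r; apply: HN.
Qed.

Lemma squeeze (f b : nat -> R) l :
  (forall n, Rabs (f n - l) <= b n)%R -> Un_cv b 0%R -> Un_cv f l.
Proof.
move=> hb H eps he; case: (H eps he) => N HN; exists N => n hn.
have := HN n hn; rewrite /R_dist Rminus_0_r => h2.
have := hb n; have := Rle_abs (b n); lra.
Qed.

Lemma sig_cv : Un_cv sig (1 - th)%R.
Proof.
apply: (@squeeze _ (fun n => th ^ n.+1)%R).
  move=> n; have h := sig_bounds n; rewrite Rabs_right; lra.
apply: (Un_cv_ext (f := fun n => th * th ^ n)%R) => //.
rewrite -(Rmult_0_r th); apply: CV_mult; last exact: pow_cv0.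
by move=> eps he; exists 0%nat => n _; rewrite /R_dist Rminus_diag_eq // Rabs_R0.
Qed.

Lemma rho_cv : Un_cv rho th.
Proof.
apply: (Un_cv_ext (f := fun n => 1 - sig n)%R); first by move=> n; rewrite rho_sig.
apply: (Un_cv_eq (l := (1 - (1 - th))%R)); first ring.
apply: CV_minus; last exact: sig_cv.
by move=> eps he; exists 0%nat => n _; rewrite /R_dist Rminus_diag_eq // Rabs_R0.
Qed.

Definition uu k j := (Af (k + j) k 0%nat th / qfact (k + j) th)%R.
Definition ww k j := (Af (k + j) k 1%nat th / qfact (k + j) th)%R.

Lemma uu0 k : uu k 0 = 1%R.
Proof. rewrite /uu addn0 Af_top0; have := qfact_pos k; move=> h; field; lra. Qed.

Lemma ww0 k : ww k 0 = 0%R.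
Proof. rewrite /ww addn0 Af_top1 /Rdiv Rmult_0_l //. Qed.

Lemma uuS k j : uu k j.+1 = (uu k j * rho (k + j))%R.
Proof.
rewrite /uu /rho addnS Af_rec0 ?leq_addr // qfact_S.
have := qfact_pos (k + j); have := Q_ge1 (k + j) => ha hb; field; lra.
Qed.

Lemma wwS k j : ww k j.+1 = (ww k j * rho (k + j) + uu k j * sig (k + j))%R.
Proof.
rewrite /ww /uu /rho /sig addnS Af_rec1 ?leq_addr // qfact_S.
have := qfact_pos (k + j); have := Q_ge1 (k + j) => ha hb; field; lra.
Qed.

Lemma lim_uw j :
  Un_cv (fun k => uu k j) (th ^ j)%R /\
  Un_cv (fun k => ww k j) (INR j * th ^ (j - 1) * (1 - th))%R.
Proof.
elim: j => [|j [IHu IHw]].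
  split.
    apply: (Un_cv_ext (f := fun _ => 1%R)); first by move=> k; rewrite uu0.
    by move=> eps he; exists 0%nat => n _; rewrite /R_dist Rminus_diag_eq // Rabs_R0.
  apply: (Un_cv_ext (f := fun _ => 0%R)); first by move=> k; rewrite ww0.
  move=> eps he; exists 0%nat => n _; rewrite /R_dist /= Rmult_0_l Rmult_0_l.
  by rewrite Rminus_diag_eq // Rabs_R0.
have hr : Un_cv (fun k => rho (k + j)) th := CV_shift' rho j th rho_cv.
have hs : Un_cv (fun k => sig (k + j)) (1 - th)%R := CV_shift' sig j (1 - th)%R sig_cv.
split.
  apply: (Un_cv_ext (f := fun k => uu k j * rho (k + j))%R); first by move=> k; rewrite uuS.
  apply: (Un_cv_eq (l := (th ^ j * th)%R)); first by rewrite /= Rmult_comm.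
  exact: CV_mult.
apply: (Un_cv_ext (f := fun k => ww k j * rho (k + j) + uu k j * sig (k + j))%R).
  by move=> k; rewrite wwS.
apply: (Un_cv_eq (l := (INR j * th ^ (j - 1) * (1 - th) * th + th ^ j * (1 - th))%R)).
  case: j {IHu IHw hr hs} => [|j]; first by rewrite /=; ring.
  rewrite !subSS subn0 !S_INR -tech_pow_Rmult; ring.
by apply: CV_plus; apply: CV_mult.
Qed.

Lemma bounds_uw k j :
  (0 <= uu k j <= th ^ j)%R /\ (0 <= ww k j <= INR j * th ^ (j - 1))%R.
Proof.
elim: j => [|j [[u0 u1] [w0 w1]]].
  rewrite uu0 ww0 /=; lra.
have := rho_range (k + j); have := sig_range (k + j) => [[s0 s1] [r0 r1]].
rewrite uuS wwS; split.
  split; first nra.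
  rewrite /=; rewrite (Rmult_comm th); apply: Rmult_le_compat; lra.
split; first nra.
have e1 : (ww k j * rho (k + j) <= INR j * th ^ (j - 1) * th)%R.
  apply: Rmult_le_compat; lra.
have e2 : (uu k j * sig (k + j) <= th ^ j)%R.
  rewrite -(Rmult_1_r (th ^ j)); apply: Rmult_le_compat; lra.
clear -e1 e2 h0.
case: j e1 e2 => [|j] e1 e2.
  have ea : (INR 1 * th ^ (1-1) = 1)%R by rewrite /=; ring.
  have eb : (INR 0 * th ^ (0-1) * th = 0)%R by rewrite /=; ring.
  have ec : (th ^ 0 = 1)%R by [].
  lra.
rewrite !subSS !subn0 in e1 *; rewrite -tech_pow_Rmult in e2 *.
rewrite (S_INR (S j)); nra.
Qed.

Lemma P_ww N k : k <= N -> P N k th = ww k (N - k).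
Proof. by move=> hk; rewrite /P W_Af /ww subnKC. Qed.

End An.



Unset Implicit Arguments.

Theorem theorem6p5 (theta : R) (h0 : (0 < theta)%R) (h1 : (theta < 1)%R) :
  (* 1. *)
  (forall j : nat, (1 <= j)%N ->
     Un_cv (fun N => P N (N - j) theta)
           (INR j * theta ^ (j - 1) * (1 - theta))%R)
  /\
  (* 2. *)
  (forall kN : nat -> nat,
     (forall N : nat, (1 <= N)%N -> (kN N <= N - 1)%N) ->
     (forall M : nat, exists N0 : nat, forall N : nat,
          (N0 <= N)%N -> (M <= N - kN N)%N) ->
     Un_cv (fun N => P N (kN N) theta) 0%R)
  /\
  (* 3. *)
  (let g := fun x : R => (x * Rpower theta (x - 1) * (1 - theta))%R in
   let jstar := Rmax (- 1 / ln theta) 1 in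
   ((1 <= jstar)%R /\ (forall x : R, (1 <= x)%R -> (g x <= g jstar)%R)) /\
   ((1 / exp 1 < theta)%R ->
      g jstar = (exp (-1) * ((theta - 1) / (theta * ln theta)))%R)).
Proof.
split; [|split].
- move=> j hj.
  apply: (CV_shift _ j).
  apply: (Un_cv_ext (f := fun n => ww theta n j)); last by case: (lim_uw h0 h1 j).
  by move=> n; rewrite P_ww ?leq_subr //; f_equal; lia.
- move=> kN hk hM eps he.
  case: (decay theta h0 h1 eps he) => M HM.
  case: (hM M) => N0 HN0.
  exists (maxn N0 1) => N hN.
  have hN0 : N0 <= N by lia.
  have hN1 : 1 <= N by lia.
  have hkN := hk N hN1.
  have hkle : kN N <= N by lia.
  rewrite /R_dist Rminus_0_r P_ww //.
  have [[_ _] [w0 w1]] := bounds_uw h0 h1 (kN N) (N - kN N).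
  rewrite Rabs_right; last lra.
  apply: Rle_lt_trans w1 _; apply: HM; apply/leP; exact: HN0.
- exact: part3.
Qed.
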